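(* Let $k,d$ be positive integers, let $D$ be a totally coloured digraph and let $A\subseteq V(D)$ be a $(3kd,d)$-connected subset of $D$. Let $S$ be a set of colours with $|S|\leq k$ and let $a_1,\dots,a_k\in A$ be vertices such that no $a_i$ has a colour in $S$ and $a_1,\dots,a_k$ have pairwise different colours. Then there is a rainbow path $P$ in $D$ from $a_1$ to $a_k$ of length at most $kd$ which passes through each of $a_1,\dots,a_k$ and has no vertex or edge with a colour in $S$.
   Context: Digraphs are finite, without loops and without multiple edges (an edge may appear in both directions). A path is a sequence of distinct vertices $x_1,\dots,x_t$ such that each $x_ix_{i+1}$ is a directed edge; its length is its number of edges. A total colouring assigns a colour to every vertex and every edge. A path (or subgraph) is rainbow if all its vertices and edges have pairwise different colours. For a totally coloured digraph $D$, a set $A\subseteq V(D)$ is $(k,d)$-connected in $D$ if for every set $S$ of at most $k-1$ colours and all vertices $x,y\in A$, there is a rainbow path from $x$ to $y$ of length at most $d$ that internally avoids $S$, i.e. none of its edges and none of its vertices other than $x$ and $y$ has a colour in $S$. *)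

(* Defs.v *)
From mathcomp Require Import all_boot.
Set Implicit Arguments. Unset Strict Implicit. Unset Printing Implicit Defensive.

(* A digraph: finite vertex type V, edge relation e (loopless: irreflexive e,
   no multiple edges by construction; both directions allowed).
   A total colouring: cv colours vertices, ce u v colours the edge uv
   (only relevant when e u v). *)

Section Rainbow.
Variables (V : finType) (C : eqType) (e : rel V) (cv : V -> C) (ce : V -> V -> C).

Definition is_path (P : seq V) (x y : V) : bool :=
  if P is z :: rest then
    [&& z == x, path e z rest, last z rest == y & uniq P]
  else false.

Definition plength (P : seq V) : nat := (size P).-1.

Definition edge_cols (P : seq V) : seq C :=
  [seq ce u.1 u.2 | u <- zip P (behead P)].

Definition rainbow (P : seq V) : bool :=
  uniq (map cv P ++ edge_cols P).

Definition internally_avoids (S : seq C) (P : seq V) (x y : V) : bool :=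
  all (fun c => c \notin S) (edge_cols P) &&
  all (fun v => [|| v == x, v == y | cv v \notin S]) P.

Definition kd_connected (k d : nat) (A : {set V}) : Prop :=
  forall (S : seq C), size S <= k.-1 ->
  forall x y, x \in A -> y \in A ->
  exists P : seq V, [&& is_path P x y, rainbow P, plength P <= d
                      & internally_avoids S P x y].

End Rainbow.

(* Main.v *)
Require Import Defs.
From mathcomp Require Import all_boot.
From mathcomp Require Import zify.

Lemma ar (s q r k d : nat) : 0 < d -> s <= k -> r.+1 <= k - 1 -> q + r.+1 * d <= (k-1)*d ->
  s + (q.+1 + q) + r.+1 <= (3*k*d).-1.
Proof. move=> *; nia. Qed.
Lemma ar2 (q q' r k d : nat) : q' <= d -> q + r.+1 * d <= (k-1)*d -> q + q' + r * d <= (k-1)*d.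
Proof. move=> *; nia. Qed.

Lemma uniq_swap (T : eqType) (a b c d : seq T) :
  uniq (a ++ b ++ c ++ d) = uniq ((a ++ c) ++ (b ++ d)).
Proof.
apply: perm_uniq; rewrite -catA perm_cat2l !catA perm_cat2r perm_catC perm_refl//.
Qed.

Section Build.
Variables (V : finType) (C : eqType) (e : rel V) (cv : V -> C) (ce : V -> V -> C).

Lemma size_ec x s : size (edge_cols ce (x :: s)) = size s.
Proof. by rewrite /edge_cols size_map size_zip /=; apply/minn_idPr. Qed.

Lemma ec_cat x Q Q' :
  edge_cols ce (x :: Q ++ Q') = edge_cols ce (x :: Q) ++ edge_cols ce (last x Q :: Q').
Proof.
elim: Q x => [|y Q IH] x //=.
by move: (IH y); rewrite /edge_cols /= => ->.
Qed.

Variables (k d : nat) (hd : 0 < d) (A : {set V})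
  (hA : kd_connected e cv ce (3 * k * d) d A) (S : seq C) (hS : size S <= k) (a1 : V).

Lemma extend rest : forall Q,
  path e a1 Q -> uniq (a1 :: Q) -> rainbow cv ce (a1 :: Q) ->
  all (fun v => cv v \notin S) (a1 :: Q) ->
  all (fun c => c \notin S) (edge_cols ce (a1 :: Q)) ->
  last a1 Q \in A ->
  all (fun v => v \in A) rest -> all (fun v => cv v \notin S) rest ->
  uniq (map cv rest) ->
  all (fun v => cv v \notin (map cv (a1 :: Q) ++ edge_cols ce (a1 :: Q))) rest ->
  size Q + size rest * d <= (k - 1) * d -> size rest <= k - 1 ->
  exists X, [&& path e a1 (Q ++ X), uniq (a1 :: Q ++ X),
     last a1 (Q ++ X) == last (last a1 Q) rest, rainbow cv ce (a1 :: Q ++ X),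
     size (Q ++ X) <= (k - 1) * d, all (fun v => v \in a1 :: Q ++ X) rest,
     all (fun v => cv v \notin S) (a1 :: Q ++ X)
   & all (fun c => c \notin S) (edge_cols ce (a1 :: Q ++ X))].
Proof.
elim: rest => [|a rest IH] Q hp hu hr hvS heS hcur hrA hrS hru hdis hsz hsk.
  exists [::]; rewrite cats0 hp hu eqxx hr hvS heS /=.
  by move: hsz; rewrite mul0n addn0 => ->.
set cur := last a1 Q.
set F := S ++ (map cv (a1 :: Q) ++ edge_cols ce (a1 :: Q)) ++ map cv (a :: rest).
have hF : size F <= (3 * k * d).-1.
  rewrite /F !size_cat size_ec !size_map /=.
  have := @ar (size S) (size Q) (size rest) k d hd hS hsk hsz; lia.
move: hrA => /= /andP [haA hrA].
have [Qs /and4P [hQ hrQ hlQ hav]] := hA F hF cur a hcur haA.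
case: Qs hQ hrQ hlQ hav => [|z Q'] //= /and4P [/eqP hz hpQ' /eqP hlast huQ'] hrQ hlQ hav.
subst z.
move: hav => /andP [haE haV].
have hQ'v : forall v, v \in Q' -> v = a \/ cv v \notin F.
  move=> v vQ; move: haV => /allP /(_ v); rewrite inE vQ orbT => /(_ isT).
  case/or3P => [/eqP vc | /eqP -> | ]; [| by left | by right].
  by move: huQ'; rewrite /= -vc vQ.
have hE2 : forall c, c \in edge_cols ce (cur :: Q') -> c \notin F.
  by move=> c cE; move: haE => /allP /(_ c cE).
have inF1 : forall c, c \in map cv (a1 :: Q) ++ edge_cols ce (a1 :: Q) -> c \in F.
  by move=> c cP; rewrite /F mem_cat mem_cat cP orbT.
have inF2 : forall c, c \in map cv (a :: rest) -> c \in F.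
  by move=> c cP; rewrite /F !mem_cat cP !orbT.
have inFS : forall c, c \in S -> c \in F.
  by move=> c cP; rewrite /F mem_cat cP.
move: hdis => /andP [hadis hdis].
move: hru => /andP [harest hru].
move: hrS => /andP [haS hrS].
have haP : a \in a1 :: Q ++ Q'.
  have : a \in cur :: Q' by rewrite -hlast mem_last.
  rewrite inE => /orP [/eqP -> | aQ'].
    by rewrite -cat_cons mem_cat /cur mem_last.
  by rewrite -cat_cons mem_cat aQ' orbT.
have hp1 : path e a1 (Q ++ Q') by rewrite cat_path hp.
have hu1 : uniq (a1 :: Q ++ Q').
  rewrite -cat_cons cat_uniq hu /=; move: huQ' => /= /andP [_ ->]; rewrite andbT.
  apply/hasPn => v vQ; case: (hQ'v v vQ) => [-> | ].
    by apply/negP => aP; move: hadis; rewrite mem_cat (map_f cv aP).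
  move=> H; apply/negP => vP; move/negP: H; apply; apply: inF1; by rewrite mem_cat (map_f cv vP).
have hr1 : rainbow cv ce (a1 :: Q ++ Q').
  rewrite /rainbow ec_cat -cat_cons map_cat -/cur -!catA uniq_swap cat_uniq.
  move: hr; rewrite /rainbow => ->.
  move: hrQ; rewrite /rainbow map_cons cat_cons cons_uniq => /andP [_ ->]; rewrite andbT /=.
  apply/hasPn => c; rewrite mem_cat => /orP [/mapP [v vQ ->] | cE].
    case: (hQ'v v vQ) => [-> // | ].
    by apply: contra => vP; apply: inF1.
  by apply: contra (hE2 c cE) => cP; apply: inF1.
have hvS1 : all (fun v => cv v \notin S) (a1 :: Q ++ Q').
  rewrite -cat_cons all_cat hvS /=; apply/allP => v vQ.
  case: (hQ'v v vQ) => [-> // |]; by apply: contra => /inFS.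
have heS1 : all (fun c => c \notin S) (edge_cols ce (a1 :: Q ++ Q')).
  rewrite ec_cat all_cat heS /=; apply/allP => c cE.
  by apply: contra (hE2 c cE) => /inFS.
have hcur1 : last a1 (Q ++ Q') \in A by rewrite last_cat -/cur hlast.
have hdis1 : all (fun v => cv v \notin map cv (a1 :: Q ++ Q') ++ edge_cols ce (a1 :: Q ++ Q')) rest.
  apply/allP => w wr.
  have wF : cv w \in F by apply: inF2; rewrite /= inE (map_f cv wr) orbT.
  rewrite ec_cat -cat_cons map_cat -/cur !mem_cat.
  have := allP hdis w wr; rewrite mem_cat => /norP [hA1 hC1]; rewrite (negbTE hA1) (negbTE hC1) /=.
  apply/norP; split.
    apply/mapP => [[v vQ vw]]; case: (hQ'v v vQ) => [va | ]; last by rewrite vw in wF; rewrite wF.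
    by move: harest; rewrite -va -vw (map_f cv wr).
  by apply/negP => /hE2; rewrite wF.
have hsz1 : size (Q ++ Q') + size rest * d <= (k - 1) * d.
  by rewrite size_cat; apply: ar2 hsz.
have hsk1 : size rest <= k - 1 by apply: leq_trans hsk.
have [X /and5P [hp2 hu2 hl2 hr2 /and4P [hs2 hin2 hvS2 heS2]]] :=
  IH (Q ++ Q') hp1 hu1 hr1 hvS1 heS1 hcur1 hrA hrS hru hdis1 hsz1 hsk1.
exists (Q' ++ X); rewrite catA hp2 (eqP hl2) last_cat -/cur hlast eqxx hr2 hs2 heS2.
move: hu2 hvS2 hin2 => /= -> -> ->; rewrite !andbT.
by rewrite -cat_cons mem_cat haP.
Qed.

End Build.

Theorem mainTheorem4 (V : finType) (C : eqType) (e : rel V)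
  (cv : V -> C) (ce : V -> V -> C) (loopless : irreflexive e)
  (k d : nat) (hk : 0 < k) (hd : 0 < d) (A : {set V})
  (hA : kd_connected e cv ce (3 * k * d) d A)
  (S : seq C) (hS : size S <= k)
  (a1 : V) (arest : seq V) (hsize : size (a1 :: arest) = k)
  (hinA : all (fun v => v \in A) (a1 :: arest))
  (hnotS : all (fun v => cv v \notin S) (a1 :: arest))
  (hdist : uniq (map cv (a1 :: arest))) :
  exists P : seq V,
    [&& is_path e P a1 (last a1 arest), rainbow cv ce P, plength P <= k * d,
        all (fun v => v \in P) (a1 :: arest),
        all (fun v => cv v \notin S) P
      & all (fun c => c \notin S) (edge_cols ce P)].
Proof.
move: hinA hnotS hdist => /= /andP [ha1A hrA] /andP [ha1S hrS] /andP [ha1d hru].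
have hr0 : rainbow cv ce [:: a1] by rewrite /rainbow /edge_cols.
have hs0 : all (fun v => cv v \notin S) [:: a1] by rewrite /= ha1S.
have := @extend V C e cv ce k d hd A hA S hS a1 arest [::] isT isT hr0 hs0 isT ha1A hrA hrS hru.
case.
- apply/allP => w wr; rewrite /edge_cols /= inE.
  by apply/eqP => E; move: ha1d; rewrite -E (map_f cv wr).
- move: hsize => /= <-; rewrite subn1 /=; lia.
- by move: hsize => /= <-; rewrite subn1.
move=> X /and5P [hp hu hl hr /and4P [hs hin hvS heS]].
rewrite ?cat0s in hp hu hl hr hs hin hvS heS.
exists (a1 :: X); rewrite /is_path /plength eqxx hp hl hu hr hin hvS heS mem_head /=.
rewrite andbT; apply: leq_trans hs _; by rewrite leq_mul2r leq_subr orbT.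
Qed.
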